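(* Let $R$ be a countable, cotorsion-free commutative ring. Let $G$ be an almost full embedding of a category of graphs into a category of torsion-free $R$-modules, i.e. a functor such that for all graphs $X,Y$ in its domain the map $\gamma:R[\mathrm{Hom}_{\mathcal{G}raphs}(X,Y)]\to\mathrm{Hom}_R(GX,GY)$, $\sum r_\varphi\varphi\mapsto\sum r_\varphi G\varphi$, is an isomorphism. If $\mathrm{Hom}_{\mathcal{G}raphs}(X,Y)$ is uncountable, then $GX$ or $GY$ is uncountable.
   Context: A graph is a set with a binary relation; graph morphisms are relation-preserving functions. $R[S]$ denotes the free $R$-module with basis $S$. An $R$-module is torsion-free if $bs=0$ with $s\ne0$ implies $b=0$. Cotorsion-free is with respect to a countable multiplicative subset $\mathbb{S}\subseteq R$ ($0\notin\mathbb{S}$, $1\in\mathbb{S}$): $R$ is $\mathbb{S}$-reduced ($\bigcap_{s\in\mathbb{S}}sR=0$), $\mathbb{S}$-torsion-free, and $\mathrm{Hom}_R(\widehat R,R)=0$ for the $\mathbb{S}$-adic completion $\widehat R$. *)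

(* Defs.v *)
From HB Require Import structures.
From mathcomp Require Import all_boot all_algebra.
Set Implicit Arguments. Unset Strict Implicit. Unset Printing Implicit Defensive.
Import GRing.Theory.
Local Open Scope ring_scope.

Definition countable (T : Type) : Prop := exists f : T -> nat, injective f.

Section Cotorsion.
Variable R : comNzRingType.
Variable S : R -> Prop.

Definition in_sR (s x : R) : Prop := exists t, x = s * t.

Definition mult_subset : Prop :=
  ~ S 0 /\ S 1 /\ (forall s t, S s -> S t -> S (s * t)).

Definition S_reduced : Prop := forall r, (forall s, S s -> in_sR s r) -> r = 0.

Definition S_torsion_free : Prop := forall s r, S s -> s * r = 0 -> r = 0.

(* The S-adic completion  \hat R = lim_{s in S} R/sR  (S directed by divisibility):
   an element is represented by a compatible family x : (s in S) |-> x s,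
   i.e. x t = x s mod sR whenever s | t; two families represent the same
   element iff x s = y s mod sR for all s in S. *)
Definition compl_family (x : R -> R) : Prop :=
  forall s t, S s -> S t -> in_sR s t -> in_sR s (x t - x s).

Definition compl_equiv (x y : R -> R) : Prop :=
  forall s, S s -> in_sR s (x s - y s).

Definition hom_completion (f : (R -> R) -> R) : Prop :=
  (forall x y, compl_family x -> compl_family y -> compl_equiv x y -> f x = f y) /\
  (forall x y, compl_family x -> compl_family y ->
     f (fun r => x r + y r) = f x + f y) /\
  (forall a x, compl_family x -> f (fun r => a * x r) = a * f x).

Definition hom_completion_zero : Prop :=
  forall f, hom_completion f -> forall x, compl_family x -> f x = 0.

Definition cotorsion_free : Prop :=
  mult_subset /\ countable {r : R | S r} /\
  S_reduced /\ S_torsion_free /\ hom_completion_zero.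

Definition torsion_free_mod (M : lmodType R) : Prop :=
  forall (b : R) (s : M), b *: s = 0 -> s <> 0 -> b = 0.

End Cotorsion.

(* Graphs: a carrier with a binary relation; morphisms preserve the relation. *)
Record ghom (V W : Type) (E : V -> V -> Prop) (F : W -> W -> Prop) := GHom {
  ghom_fun :> V -> W;
  ghom_prop : forall x y, E x y -> F (ghom_fun x) (ghom_fun y) }.

Definition ghom_id (V : Type) (E : V -> V -> Prop) : ghom E E :=
  @GHom V V E E id (fun x y h => h).

Definition ghom_comp (U V W : Type) (E : U -> U -> Prop) (F : V -> V -> Prop)
  (H : W -> W -> Prop) (g : ghom F H) (f : ghom E F) : ghom E H :=
  @GHom U W E H (fun x => g (f x))
    (fun x y h => ghom_prop g (ghom_prop f h)).

Section Functor.
Variable R : comNzRingType.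
Variable I : Type.
Variable V : I -> Type.
Variable E : forall i : I, V i -> V i -> Prop.
Arguments E : clear implicits.
Variable M : I -> lmodType R.
Variable G : forall i j, ghom (@E i) (@E j) -> {linear M i -> M j}.

Definition is_functor : Prop :=
  (forall i (x : M i), G (ghom_id (@E i)) x = x) /\
  (forall i j k (f : ghom (@E i) (@E j)) (g : ghom (@E j) (@E k)) (x : M i),
      G (ghom_comp g f) x = G g (G f x)).

(* gamma : R[Hom(X,Y)] -> Hom_R(GX,GY), sum r_phi phi |-> sum r_phi G phi,
   is bijective; elements of R[Hom(X,Y)] are finite sums over distinct phi. *)
Definition almost_full : Prop :=
  forall i j,
    (forall h : {linear M i -> M j},
       exists n (phi : 'I_n -> ghom (@E i) (@E j)) (c : 'I_n -> R),
         forall x, h x = \sum_(k < n) c k *: G (phi k) x) /\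
    (forall n (phi : 'I_n -> ghom (@E i) (@E j)) (c : 'I_n -> R),
       injective phi ->
       (forall x, \sum_(k < n) c k *: G (phi k) x = 0) ->
       forall k, c k = 0).

End Functor.

(* Main.v *)
Require Import Defs.
From HB Require Import structures.
From mathcomp Require Import all_boot all_algebra.
From Stdlib Require Import Classical ClassicalEpsilon.
From mathcomp Require Import zify ring.
Set Implicit Arguments. Unset Strict Implicit. Unset Printing Implicit Defensive.
Import GRing.Theory.
Local Open Scope ring_scope.

Section Mk.
Variables (R : comNzRingType) (U V : lmodType R) (f : U -> V) (hf : linear f).
Definition mkL : U -> V := let _ := hf in f.
HB.instance Definition _ := GRing.isLinear.Build R U V *:%R mkL hf.
End Mk.

Definition dec (P : Prop) : bool := if excluded_middle_informative P then true else false.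
Lemma decP (P : Prop) : reflect P (dec P).
Proof. rewrite /dec; case: excluded_middle_informative => h; by constructor. Qed.

Section Lists.
Variables (R : comNzRingType) (A B : lmodType R) (H : Type) (G : H -> {linear A -> B}).
Hypothesis Hind : forall n (phi : 'I_n -> H) (c : 'I_n -> R), injective phi ->
  (forall x, \sum_(k < n) c k *: G (phi k) x = 0) -> forall k, c k = 0.

Definition ev (l : seq (H * R)) (x : A) : B := \sum_(p <- l) p.2 *: G p.1 x.
Definition cf (psi : H) (l : seq (H * R)) : R :=
  \sum_(p <- l) (if dec (p.1 = psi) then p.2 else 0).

Lemma merge_sum (Z : zmodType) (w : H -> R -> Z)
  (wD : forall a c d, w a (c + d) = w a c + w a d) l1 l2 l3 a c d :
  \sum_(p <- l1 ++ (a, c) :: l2 ++ (a, d) :: l3) w p.1 p.2 =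
  \sum_(p <- l1 ++ (a, c + d) :: l2 ++ l3) w p.1 p.2.
Proof.
rewrite !big_cat !big_cons !big_cat !big_cons /= wD.
congr (_ + _); rewrite -addrA; congr (_ + _); by rewrite addrCA.
Qed.

Lemma decomp (T : Type) (x0 : T) (l : seq T) i j : (i < j)%N -> (j < size l)%N ->
  l = take i l ++ nth x0 l i :: take (j - i.+1) (drop i.+1 l) ++ nth x0 l j :: drop j.+1 l.
Proof.
move=> ij jl.
have il : (i < size l)%N by apply: ltn_trans jl.
rewrite -{1}(cat_take_drop i l) (drop_nth x0 il); congr (_ ++ _ :: _).
rewrite -{1}(cat_take_drop (j - i.+1) (drop i.+1 l)) drop_drop subnK //.
by rewrite (drop_nth x0 jl).
Qed.

Lemma cf_nth x0 psi l : (forall i, (i < size l)%N -> (nth x0 l i).1 <> psi) -> cf psi l = 0.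
Proof.
move=> h; rewrite /cf (big_nth x0) big_mkord big1 // => k _.
by case: decP => // /(h k (ltn_ord k)).
Qed.

Lemma Z_aux n : forall l, (size l <= n)%N -> (forall x, ev l x = 0) -> forall psi, cf psi l = 0.
Proof.
elim: n => [|n IH] l sz hev psi.
  by case: l sz hev => // _ _; rewrite /cf big_nil.
have [[l1 [l2 [l3 [a [c [d e]]]]]]|nd] := classic (exists l1 l2 l3 a c d,
    l = l1 ++ (a, c) :: l2 ++ (a, d) :: l3).
- move: sz hev; rewrite e /cf => sz hev.
  rewrite (@merge_sum R (fun a c => if dec (a = psi) then c else 0)); last first.
    by move=> ? ? ?; case: ifP; rewrite ?addr0.
  apply: IH.
    move: sz; rewrite !size_cat /= !size_cat /=; lia.
  move=> x; rewrite /ev -(@merge_sum B (fun a c => c *: G a x)); first exact: hev.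
  by move=> ? ? ?; rewrite scalerDl.
- case: l sz hev nd => [|x0 l0] sz hev nd; first by rewrite /cf big_nil.
  set l := x0 :: l0 in sz hev nd *.
  have inj : injective (fun k : 'I_(size l) => (nth x0 l k).1).
    move=> u v e; apply: val_inj => /=.
    have gen : forall i j, (i < j)%N -> (j < size l)%N -> (nth x0 l i).1 = (nth x0 l j).1 -> False.
      move=> i j ij jl eij; apply: nd.
      exists (take i l), (take (j - i.+1) (drop i.+1 l)), (drop j.+1 l).
      exists (nth x0 l i).1, (nth x0 l i).2, (nth x0 l j).2.
      rewrite {1}(decomp x0 ij jl); congr (_ ++ _ :: _ ++ _ :: _).
        by case: (nth x0 l i).
      by rewrite eij; case: (nth x0 l j).
    case: (ltngtP u v) => // h; exfalso.
      exact: (gen _ _ h (ltn_ord v) e).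
    exact: (gen _ _ h (ltn_ord u) (esym e)).
  have H0 := Hind inj (c := fun k => (nth x0 l k).2).
  have H1 : forall k : 'I_(size l), (nth x0 l k).2 = 0.
    apply: H0 => x; have := hev x; rewrite /ev (big_nth x0) big_mkord //.
  rewrite /cf (big_nth x0) big_mkord big1 // => k _.
  by rewrite H1; case: ifP.
Qed.

Lemma Zlem l : (forall x, ev l x = 0) -> forall psi, cf psi l = 0.
Proof. exact: (@Z_aux (size l) l (leqnn _)). Qed.
End Lists.

Section Main.
Variables (R : comNzRingType) (A B : lmodType R) (H : Type) (G : H -> {linear A -> B}).
Hypothesis Hind : forall n (phi : 'I_n -> H) (c : 'I_n -> R), injective phi ->
  (forall x, \sum_(k < n) c k *: G (phi k) x = 0) -> forall k, c k = 0.
Hypothesis Hsurj : forall h : {linear A -> B},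
  exists n (phi : 'I_n -> H) (c : 'I_n -> R),
    forall x, h x = \sum_(k < n) c k *: G (phi k) x.
Variables (fA : A -> nat) (fB : B -> nat).
Hypotheses (fAi : injective fA) (fBi : injective fB).
Hypothesis Hunc : ~ countable H.
Variable h0 : H.

Definition invA (i : nat) : option A :=
  match excluded_middle_informative (exists a, fA a = i) with
  | left e => Some (proj1_sig (constructive_indefinite_description _ e))
  | right _ => None end.

Lemma invA_fA a : invA (fA a) = Some a.
Proof.
rewrite /invA; case: excluded_middle_informative => [e|ne].
  by case: (constructive_indefinite_description _ e) => b /= /fAi ->.
by exfalso; apply: ne; exists a.
Qed.

Definition pat (k : nat) (phi : H) : seq (option nat) :=
  [seq omap (fun a => fB (G phi a)) (invA i) | i <- iota 0 k].

Lemma pat_eq k phi psi a : pat k phi = pat k psi -> (fA a < k)%N -> G phi a = G psi a.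
Proof.
move=> e lt; have := congr1 (fun s => nth None s (fA a)) e.
rewrite /= !(nth_map 0%N) ?size_iota // nth_iota // add0n invA_fA /=.
by case=> /fBi.
Qed.

Definition rep (t : nat * seq (option nat)) : H :=
  match excluded_middle_informative (exists psi, pat t.1 psi = t.2) with
  | left e => proj1_sig (constructive_indefinite_description _ e)
  | right _ => h0 end.

Lemma rep_pat k phi : pat k (rep (k, pat k phi)) = pat k phi.
Proof.
rewrite /rep; case: excluded_middle_informative => [e|ne] /=.
  by case: (constructive_indefinite_description _ e).
by exfalso; apply: ne; exists phi.
Qed.

Definition repall (n : nat) : H :=
  match unpickle n with Some t => rep t | None => h0 end.

Lemma repall_rep t : repall (pickle t) = rep t.
Proof. by rewrite /repall pickleK. Qed.

Lemma avoid (L : nat -> H) : exists phi, forall n, phi <> L n.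
Proof.
apply: NNPP => hn; apply: Hunc.
have hx : forall phi, exists n, L n = phi.
  move=> phi; apply: NNPP => h1; apply: hn; exists phi => n e; apply: h1.
  by exists n.
exists (fun phi => proj1_sig (constructive_indefinite_description _ (hx phi))).
move=> u v e.
case: (constructive_indefinite_description _ (hx u)) e => /= n <-.
by case: (constructive_indefinite_description _ (hx v)) => /= m <- ->.
Qed.

Lemma avoid2 (s : seq H) : exists phi,
  (forall n, phi <> repall n) /\ (forall i, (i < size s)%N -> phi <> nth h0 s i).
Proof.
have [phi hphi] := avoid (fun n => if (n < size s)%N then nth h0 s n else repall (n - size s)).
exists phi; split.
  move=> n e; apply: (hphi (n + size s)); rewrite ifF; first by rewrite addnK.
  by apply/negbTE; rewrite -leqNgt leq_addl.
by move=> i il e; apply: (hphi i); rewrite il.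
Qed.

Definition pick (s : seq H) : H := proj1_sig (constructive_indefinite_description _ (avoid2 s)).

Lemma pickP s : (forall n, pick s <> repall n) /\
  (forall i, (i < size s)%N -> pick s <> nth h0 s i).
Proof. by rewrite /pick; case: (constructive_indefinite_description _ (avoid2 s)). Qed.

Fixpoint phis (k : nat) : seq H :=
  match k with 0 => [::] | k'.+1 => rcons (phis k') (pick (phis k')) end.

Definition phi (k : nat) : H := pick (phis k).

Lemma phis_map k : phis k = map phi (iota 0 k).
Proof. elim: k => // k IH; rewrite -[in RHS]addn1 iotaD map_cat -IH /= cats1. by []. Qed.

Lemma phi_neq i k : (i < k)%N -> phi k <> phi i.
Proof.
move=> ik; have := (pickP (phis k)).2 i; rewrite -/(phi k) phis_map size_map size_iota.
by move=> /(_ ik); rewrite (nth_map 0%N) ?size_iota // nth_iota.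
Qed.

Lemma phi_inj i j : phi i = phi j -> i = j.
Proof.
case: (ltngtP i j) => // h e; exfalso.
  exact: (phi_neq h (esym e)).
exact: (phi_neq h e).
Qed.

Lemma phi_rep k t : phi k <> rep t.
Proof. by rewrite -repall_rep; apply: (pickP _).1. Qed.

Definition psi (k : nat) : H := rep (k, pat k (phi k)).

Definition d (k : nat) (x : A) : B := G (phi k) x - G (psi k) x.

Lemma d0 k x : (fA x < k)%N -> d k x = 0.
Proof.
move=> lt; rewrite /d (@pat_eq k (psi k) (phi k) x) ?subrr //.
exact: rep_pat.
Qed.

Lemma d_lin k r x y : d k (r *: x + y) = r *: d k x + d k y.
Proof. by rewrite /d (linearP (G (phi k))) (linearP (G (psi k))) opprD addrACA scalerBr. Qed.

Definition Tf (a : nat -> R) (x : A) : B := \sum_(k < (fA x).+1) a k *: d k x.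

Lemma Tf_ext a x N : (fA x < N)%N -> Tf a x = \sum_(k < N) a k *: d k x.
Proof.
move=> lt; rewrite /Tf (big_ord_widen _ (fun k => a k *: d k x) lt).
rewrite [RHS](bigID (fun k : 'I_N => (k < (fA x).+1)%N)) /=.
rewrite [X in _ = _ + X]big1 ?addr0 // => k; rewrite -leqNgt => h.
by rewrite d0 ?scaler0.
Qed.

Lemma Tf_lin a : linear (Tf a).
Proof.
move=> r x y.
set N := (maxn (fA (r *: x + y)) (maxn (fA x) (fA y))).+1.
rewrite !(@Tf_ext a _ N) /N ?ltnS ?leq_maxl //; try lia.
rewrite scaler_sumr -big_split /=; apply: eq_bigr => k _.
by rewrite d_lin scalerDr !scalerA mulrC.
Qed.

Definition TL (a : nat -> R) : {linear A -> B} := mkL (Tf_lin a).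

Lemma TLE a x : TL a x = Tf a x. Proof. by []. Qed.


Variable S : R -> Prop.
Hypotheses (Smult : mult_subset S) (Sred : S_reduced S) (Stf : S_torsion_free S).

Lemma exists_s : exists s, S s /\ ~ in_sR s 1.
Proof.
apply: NNPP => hn.
have : (1 : R) = 0.
  apply: Sred => s Ss; apply: NNPP => h; apply: hn; exists s; by split.
by move/eqP; rewrite oner_eq0.
Qed.

Lemma Sexp s k : S s -> S (s ^+ k).
Proof.
move=> Ss; elim: k => [|k IH]; first by rewrite expr0; exact: Smult.2.1.
by rewrite exprS; apply: Smult.2.2.
Qed.

Lemma ev_cat l1 l2 x : ev G (l1 ++ l2) x = ev G l1 x + ev G l2 x.
Proof. by rewrite /ev big_cat. Qed.

Lemma cf_cat (q : H) (l1 l2 : seq (H * R)) : cf q (l1 ++ l2) = cf q l1 + cf q l2.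
Proof. by rewrite /cf big_cat. Qed.

Definition scl (r : R) (l : seq (H * R)) := [seq (p.1, r * p.2) | p <- l].

Lemma ev_scl r l x : ev G (scl r l) x = r *: ev G l x.
Proof.
rewrite /ev big_map scaler_sumr; apply: eq_bigr => p _ /=; by rewrite scalerA.
Qed.

Lemma cf_scl (q : H) r l : cf q (scl r l) = r * cf q l.
Proof.
rewrite /cf big_map mulr_sumr; apply: eq_bigr => p _ /=; by case: ifP; rewrite ?mulr0.
Qed.

Lemma surj_list (h : {linear A -> B}) : exists l, forall x, h x = ev G l x.
Proof.
have [n [ph [c hc]]] := Hsurj h.
exists [seq (ph k, c k) | k <- enum 'I_n] => x.
by rewrite hc /ev big_map big_enum.
Qed.

Lemma pigeon (l : seq (H * R)) x0 : exists K, forall i, (i < size l)%N -> (nth x0 l i).1 <> phi K.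
Proof.
apply: NNPP => hn.
have hx : forall K : 'I_(size l).+1, exists i : 'I_(size l), (nth x0 l i).1 = phi K.
  move=> K; apply: NNPP => h1; apply: hn; exists K => i il e; apply: h1.
  by exists (Ordinal il).
pose f K := proj1_sig (constructive_indefinite_description _ (hx K)).
have finj : injective f.
  move=> u v e; apply: val_inj; apply: phi_inj.
  rewrite -(proj2_sig (constructive_indefinite_description _ (hx u))).
  rewrite -(proj2_sig (constructive_indefinite_description _ (hx v))).
  by rewrite -/(f u) -/(f v) e.
by have := leq_card f finj; rewrite !card_ord ltnn.
Qed.

Fixpoint mid (s : R) (n : nat) : seq (H * R) :=
  match n with 0 => [::]
  | n'.+1 => mid s n' ++ [:: (phi n', - s ^+ n'); (psi n', s ^+ n')] end.

Lemma ev_mid s n x : ev G (mid s n) x = - \sum_(k < n) s ^+ k *: d k x.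
Proof.
elim: n => [|n IH] /=; first by rewrite big_ord0 oppr0 /ev big_nil.
rewrite ev_cat IH big_ord_recr /= opprD; congr (_ + _).
by rewrite /ev !big_cons big_nil addr0 /= /d scaleNr scalerBr opprB addrC.
Qed.

Lemma cf_pair (s : R) n K : (n < K)%N -> cf (phi K) [:: (phi n, - s ^+ n); (psi n, s ^+ n)] = 0.
Proof.
move=> nK; rewrite /cf !big_cons big_nil /=.
case: decP => [e|_]; first by exfalso; apply: (phi_neq nK); rewrite e.
case: decP => [e|_]; first by exfalso; apply: (@phi_rep K (n, pat n (phi n))); rewrite -e.
by rewrite !add0r.
Qed.

Lemma cf_mid0 s n K : (n <= K)%N -> cf (phi K) (mid s n) = 0.
Proof.
elim: n => [|n IH] nK /=; first by rewrite /cf big_nil.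
by rewrite cf_cat IH ?cf_pair ?addr0 // ltnW.
Qed.

Lemma cf_midK s K : cf (phi K) (mid s K.+1) = - s ^+ K.
Proof.
rewrite /= cf_cat cf_mid0 // add0r /cf !big_cons big_nil /=.
case: decP => // _.
case: decP => [e|_]; first by exfalso; exact: (@phi_rep K (K, pat K (phi K)) (esym e)).
by rewrite !addr0.
Qed.

Lemma main_false : False.
Proof.
have [s [Ss ns]] := exists_s.
have [l hl] := surj_list (TL (fun k => s ^+ k)).
have [K hK] := pigeon l (h0, 0).
pose b k := if (K < k)%N then s ^+ (k - K.+1) else 0.
have [l2 hl2] := surj_list (TL b).
have ident : forall x, Tf (fun k => s ^+ k) x =
    \sum_(k < K.+1) s ^+ k *: d k x + s ^+ K.+1 *: Tf b x.
  move=> x; set N := maxn (fA x).+1 K.+1.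
  have h1 : (fA x < N)%N by rewrite /N; lia.
  rewrite !(@Tf_ext _ x N) //.
  have h2 : (K.+1 <= N)%N by rewrite /N; lia.
  have E1 : forall F : nat -> B, \sum_(k < N) F k = \sum_(0 <= k < N) F k.
    by move=> F; rewrite big_mkord.
  have E2 : forall F : nat -> B, \sum_(k < K.+1) F k = \sum_(0 <= k < K.+1) F k.
    by move=> F; rewrite big_mkord.
  rewrite (E1 (fun k => s ^+ k *: d k x)) (E1 (fun k => b k *: d k x)).
  rewrite (E2 (fun k => s ^+ k *: d k x)) (@big_cat_nat _ _ _ K.+1) //=; congr (_ + _).
  rewrite [in RHS](@big_cat_nat _ _ _ K.+1) //=.
  rewrite [X in _ = _ *: (X + _)]big_nat_cond [X in _ = _ *: (X + _)]big1 ?add0r; last first.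
    move=> k /andP[/andP[_ h] _]; rewrite /b ifF ?scale0r //.
    by apply/negbTE; rewrite -leqNgt -ltnS.
  rewrite scaler_sumr; apply: eq_big_nat => k /andP[hk _].
  by rewrite /b hk scalerA -exprD subnKC.
pose Lt := l ++ mid s K.+1 ++ scl (- s ^+ K.+1) l2.
have hz : forall x, ev G Lt x = 0.
  move=> x; rewrite ev_cat ev_cat ev_mid ev_scl -hl -hl2 !TLE ident.
  by rewrite scaleNr -opprD subrr.
have := Zlem Hind hz (phi K).
rewrite cf_cat cf_cat cf_midK cf_scl (cf_nth hK) add0r => e.
set c2 := cf (phi K) l2 in e.
have e2 : s ^+ K * (1 + s * c2) = 0.
  have -> : s ^+ K * (1 + s * c2) = - (- s ^+ K + - s ^+ K.+1 * c2).
    by rewrite exprSr; ring.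
  by rewrite e oppr0.
have e3 := Stf (Sexp K Ss) e2.
apply: ns; exists (- c2).
by apply/eqP; rewrite -subr_eq0 mulrN opprK; apply/eqP.
Qed.

End Main.

Theorem corollary3p19 (R : comNzRingType) (S : R -> Prop)
  (I : Type) (V : I -> Type) (E : forall i, V i -> V i -> Prop)
  (M : I -> lmodType R)
  (G : forall i j, ghom (E i) (E j) -> {linear M i -> M j}) :
  countable R -> cotorsion_free S ->
  (forall i, torsion_free_mod (M i)) ->
  is_functor G -> almost_full G ->
  forall X Y, ~ countable (ghom (E X) (E Y)) ->
  ~ countable (M X) \/ ~ countable (M Y).
Proof.
move=> _ [Smult [_ [Sred [Stf _]]]] _ _ hAF X Y Hunc.
have [[fA fAi]|nX] := classic (countable (M X)); last by left.
have [[fB fBi]|nY] := classic (countable (M Y)); last by right.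
exfalso.
have [Hsurj Hind] := hAF X Y.
have hex : exists h : ghom (E X) (E Y), True.
  apply: NNPP => hn; apply: Hunc; exists (fun _ => 0%N) => u v _.
  by exfalso; apply: hn; exists u.
have h0 := proj1_sig (constructive_indefinite_description _ hex).
exact: (@main_false R (M X) (M Y) _ (@G X Y) Hind Hsurj fA fB fAi fBi Hunc h0 S Smult Sred Stf).
Qed.
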